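(* Let $p\ge3$ be prime and $A,\iota,\chi,\gamma_k$ as in the context. Then \[\chi\circ\gamma_{p-1}+\gamma_{p-1}\circ\chi+\sum_{k=2}^{p-2}\gamma_k\circ\gamma_{p-k}=\iota^{p-1}.\]
   Context: Let $p\ge3$ be prime, $l:=2(p-1)$; $\omega(i):=r+1$ if $i=jl+r$ with $0\le r\le p-2$, and $\omega(i):=l-r$ if $p-1\le r\le l-1$. Let $P_1,\dots,P_{p-1}$ and $e_k$ (identity of $P_k$), $e_{1,1},e_{p-1,p-1},e_{k+1,k}:P_k\to P_{k+1},e_{k,k+1}:P_{k+1}\to P_k$ be as follows: with $\Gamma=\prod_{\lambda\vdash p}\mathbb{Z}_{(p)}^{n_\lambda\times n_\lambda}$ ($n_\lambda$ = Specht module rank), hooks $\lambda^k=(p-k+1,1^{k-1})$, $n^k_{\rm b}=\binom{p-2}{k-1}$, $n^k_{\rm c}=\binom{p-2}{k-2}$, $\Lambda=\{\rho\in\Gamma:\rho^{\lambda^k}_{\rm bb}\equiv\rho^{\lambda^{k+1}}_{\rm cc}\bmod p,\ \rho^{\lambda^k}_{\rm bc}\equiv0\bmod p\}$ (blocks ${\rm cc}$ upper-left $n^k_{\rm c}\times n^k_{\rm c}$, ${\rm bc}$ upper-right, ${\rm bb}$ lower-right), $\mathbb{F}_p\mathfrak{S}_p$ identified with $\Lambda/p\Lambda$ via the known isomorphism $\mathbb{Z}_{(p)}\mathfrak{S}_p\cong\Lambda$, matrix units $\eta_{\lambda,i,j}$, $\tilde e_k=\eta_{\lambda^k,n^k_{\rm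 c}+1,n^k_{\rm c}+1}+\eta_{\lambda^{k+1},1,1}$, $P_k=\tilde e_k\Lambda/p\tilde e_k\Lambda$, maps induced by left multiplication with $p\eta_{\lambda^1,1,1}$, $p\eta_{\lambda^p,1,1}$, $\eta_{\lambda^{k+1},n^{k+1}_{\rm c}+1,1}$, $p\eta_{\lambda^{k+1},1,n^{k+1}_{\rm c}+1}$. Resolution $\mathcal P$: $\mathcal P_i=P_{\omega(i)}$ ($i\ge0$), $0$ ($i<0$), $d_i=e_{\omega(i-1),\omega(i)}$. $\operatorname{Hom}^z(C,C')=\prod_i\operatorname{Hom}(C_{i+z},C'_i)$, composition componentwise; $\lfloor g\rfloor^y_x$ ($g:C_x\to C'_y$) has $g$ as its $y$-th component, zero elsewhere. $A=\bigoplus_z\operatorname{Hom}^z_{\mathbb{F}_p\mathfrak{S}_p}(\mathcal P,\mathcal P)$ (graded algebra under composition). $\iota:=\sum_{i\ge0}\lfloor e_{\omega(i)}\rfloor^i_{i+l}$; $\chi:=\sum_{i\ge0}(\lfloor e_1\rfloor^{il}_{il+l-1}+\sum_{k=1}^{p-2}\lfloor e_{k+1,k}\rfloor^{il+k}_{il+l-1+k}+\lfloor e_{p-1}\rfloor^{il+p-1}_{il+l-1+p-1}+\sum_{k=1}^{p-2}\lfloor e_{p-k-1,p-k}\rfloor^{il+p-1+k}_{il+l-1+p-1+k})$; $\gamma_k:=\sum_{i\ge0}(\lfloor e_k\rfloor^{k-1+li}_{k(l-1)+li}+\lfloor e_{p-k}\rfloor^{k-1+(p-1)+li}_{k(l-1)+(p-1)+li})$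 for $k\in[2,p-1]$. *)

(* Defs.v *)
From HB Require Import structures.
From mathcomp Require Import all_boot all_order all_algebra.
Set Implicit Arguments. Unset Strict Implicit. Unset Printing Implicit Defensive.
Import Order.TTheory GRing.Theory Num.Theory.
Local Open Scope ring_scope.

Definition zloc (p : nat) (x : rat) : bool := ~~ (p %| `|denq x|)%N.
Definition congp (p : nat) (x y : rat) : bool := zloc p ((x - y) / p%:R).

Definition is_part (n : nat) (la : seq nat) : bool :=
  [&& sumn la == n, sorted geq la & all (fun x => 0 < x)%N la].
Definition hook_len (la : seq nat) (r c : nat) : nat :=
  ((nth 0 la r - c) + (count (fun x => c < x)%N la - r) - 1)%N.
Definition nSpecht (la : seq nat) : nat :=
  ((sumn la)`! %/ \prod_(r < size la) \prod_(c < nth 0 la r) hook_len la r c)%N.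

Definition hookp (p k : nat) : seq nat := ((p - k + 1)%N :: nseq (k - 1) 1%N).
Definition nb (p k : nat) : nat := 'C(p - 2, k - 1).
Definition nc (p k : nat) : nat := if (k < 2)%N then 0%N else 'C(p - 2, k - 2).

(* ---------- Gamma: elements are families of matrices, 1-indexed, zero outside ---------- *)
Definition G := seq nat -> nat -> nat -> rat.
Definition inGamma (p : nat) (x : G) : Prop :=
  forall la i j, zloc p (x la i j) /\
    (x la i j != 0 -> [&& is_part p la, (0 < i <= nSpecht la)%N & (0 < j <= nSpecht la)%N]).
Definition eqG (x y : G) : Prop := forall la i j, x la i j = y la i j.
Definition addG (x y : G) : G := fun la i j => x la i j + y la i j.
Definition oppG (x : G) : G := fun la i j => - x la i j.
Definition zeroG : G := fun _ _ _ => 0.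
Definition scaleG (c : rat) (x : G) : G := fun la i j => c * x la i j.
Definition mulG (x y : G) : G :=
  fun la i j => \sum_(1 <= m < (nSpecht la).+1) x la i m * y la m j.
Definition eta (la : seq nat) (a b : nat) : G :=
  fun mu i j => if [&& mu == la, i == a & j == b] then 1 else 0.

Definition inLambda (p : nat) (x : G) : Prop :=
  inGamma p x /\
  forall k, (1 <= k <= p - 1)%N ->
    (forall i j, (1 <= i <= nb p k)%N -> (1 <= j <= nb p k)%N ->
       congp p (x (hookp p k) (nc p k + i)%N (nc p k + j)%N) (x (hookp p k.+1) i j)) /\
    (forall i j, (1 <= i <= nc p k)%N -> (nc p k < j <= nc p k + nb p k)%N ->
       congp p (x (hookp p k) i j) 0).

Definition et (p k : nat) : G :=
  addG (eta (hookp p k) (nc p k).+1 (nc p k).+1) (eta (hookp p k.+1) 1 1).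

(* x represents an element of P_k = e~_k Lambda / p e~_k Lambda *)
Definition inP (p k : nat) (x : G) : Prop :=
  exists rho, inLambda p rho /\ eqG x (mulG (et p k) rho).
(* x lies in p e~_k Lambda, i.e. represents 0 in P_k *)
Definition inpP (p k : nat) (x : G) : Prop :=
  exists rho, inLambda p rho /\ eqG x (scaleG p%:R (mulG (et p k) rho)).

(* ---------- maps between the P_k (acting on representatives) ---------- *)
Definition Mp := G -> G.
Definition addM (f g : Mp) : Mp := fun x => addG (f x) (g x).
Definition zeroM : Mp := fun _ => zeroG.
Definition e_id : Mp := id.
(* e_{k+1,k} : P_k -> P_{k+1} *)
Definition e_up (p k : nat) : Mp := mulG (eta (hookp p k.+1) (nc p k.+1).+1 1).
(* e_{k,k+1} : P_{k+1} -> P_k *)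
Definition e_down (p k : nat) : Mp :=
  mulG (scaleG p%:R (eta (hookp p k.+1) 1 (nc p k.+1).+1)).
Definition e_11 (p : nat) : Mp := mulG (scaleG p%:R (eta (hookp p 1) 1 1)).
Definition e_pp (p : nat) : Mp := mulG (scaleG p%:R (eta (hookp p p) 1 1)).

Definition ll (p : nat) : nat := (2 * (p - 1))%N.
Definition omega (p i : nat) : nat :=
  let r := (i %% ll p)%N in if (r <= p - 2)%N then r.+1 else (ll p - r)%N.

(* ---------- Hom^z(P,P): component i (i >= 0) is a map P_{omega(i+z)} -> P_{omega(i)};
   components with i < 0 have target 0 and are omitted ---------- *)
Definition Hm := nat -> Mp.
Definition addH (f g : Hm) : Hm := fun i => addM (f i) (g i).
Definition zeroH : Hm := fun _ => zeroM.
Definition flr (y : nat) (g : Mp) : Hm := fun i => if i == y then g else zeroM.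
(* sum_{i >= 0} F i, where the y-th component of F i vanishes for i > y *)
Definition ser (F : nat -> Hm) : Hm := fun y => \big[addM/zeroM]_(i < y.+1) F i y.
(* composition of f in Hom^a with g in Hom^b, landing in Hom^(a+b) *)
Definition compH (a : nat) (f g : Hm) : Hm := fun i => f i \o g (i + a)%N.
Definition idH : Hm := fun _ => e_id.
Definition powH (a : nat) (f : Hm) (n : nat) : Hm := iter n (compH a f) idH.
(* equality in Hom^z(P,P): components agree as maps on the quotients *)
Definition eqH (p z : nat) (f g : Hm) : Prop :=
  forall i x, inP p (omega p (i + z)) x -> inpP p (omega p i) (addG (f i x) (oppG (g i x))).

Definition iotaH (p : nat) : Hm := ser (fun i => flr i e_id).
Definition chiH (p : nat) : Hm :=
  ser (fun i =>
    addH (flr (i * ll p)%N e_id)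
   (addH (\big[addH/zeroH]_(1 <= k < p - 1) flr (i * ll p + k)%N (e_up p k))
   (addH (flr (i * ll p + (p - 1))%N e_id)
         (\big[addH/zeroH]_(1 <= k < p - 1)
             flr (i * ll p + (p - 1) + k)%N (e_down p (p - k - 1)))))).
Definition gammaH (p k : nat) : Hm :=
  ser (fun i => addH (flr (k - 1 + ll p * i)%N e_id)
                     (flr (k - 1 + (p - 1) + ll p * i)%N e_id)).
Definition dchi (p : nat) : nat := (ll p - 1)%N.
Definition dgamma (p k : nat) : nat := (k * (ll p - 1) - (k - 1))%N.

(* Main.v *)
Require Import Defs.
From HB Require Import structures.
From mathcomp Require Import all_boot all_order all_algebra zify.
From Stdlib Require Import FunctionalExtensionality.
Set Implicit Arguments. Unset Strict Implicit. Unset Printing Implicit Defensive.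
Import GRing.Theory.

Ltac ifs := repeat (case: ifP => ?); rewrite ?addr0 ?add0r //; try (exfalso; lia).

Section Helpers.
Local Open Scope ring_scope.

Lemma evM (I : Type) (r : seq I) (F : I -> Mp) x la a b :
  (\big[addM/zeroM]_(i <- r) F i) x la a b = \sum_(i <- r) F i x la a b.
Proof. exact: (big_morph (fun f : Mp => f x la a b) (id1:=0) (op1:=+%R)). Qed.

Lemma evH (I : Type) (r : seq I) (F : I -> Hm) y x la a b :
  (\big[addH/zeroH]_(i <- r) F i) y x la a b = \sum_(i <- r) F i y x la a b.
Proof. exact: (big_morph (fun f : Hm => f y x la a b) (id1:=0) (op1:=+%R)). Qed.

Lemma flrE n g y x la a b :
  flr n g y x la a b = if y == n then g x la a b else 0.
Proof. by rewrite /flr; case: eqP. Qed.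

Lemma sum_ind (n q : nat) (v : rat) :
  \sum_(i < n) (if (i : nat) == q then v else 0) = if (q < n)%N then v else 0.
Proof.
elim: n => [|n IH]; first by rewrite big_ord0.
rewrite big_ord_recr /= IH.
ifs.
Qed.

Lemma sum_nat_ind (m n q : nat) (v : rat) :
  \sum_(m <= k < n) (if k == q then v else 0) = if (m <= q < n)%N then v else 0.
Proof.
elim: n => [|n IH]; first by rewrite big_geq // ltn0 andbF.
case: (leqP m n) => Hmn.
  rewrite big_nat_recr //= IH.
  ifs.
rewrite big_geq //; case: ifP => // H; exfalso; lia.
Qed.

Lemma cond_split (z i l c : nat) : (c < l)%N ->
  ((z == i * l + c) = (i == z %/ l) && (z %% l == c))%N.
Proof.
move=> Hc; have Hl : (0 < l)%N by lia.
apply/eqP/andP.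
  move=> ->; rewrite divnMDl // modnMDl divn_small // modn_small //.
  by rewrite addn0.
by case=> /eqP -> /eqP <-; exact: divn_eq.
Qed.

Lemma sum_mod z l c (v : rat) : (c < l)%N ->
  \sum_(i < z.+1) (if z == (i * l + c)%N then v else 0) = if (z %% l == c)%N then v else 0.
Proof.
move=> Hc.
rewrite (eq_bigr (fun i : 'I_z.+1 => if ((i : nat) == z %/ l)%N then (if (z %% l == c)%N then v else 0) else 0)).
  rewrite sum_ind ltnS leq_div //.
move=> i _; rewrite cond_split //.
by case: (_ == _); case: (_ == _).
Qed.

Lemma modE (z m t P : nat) : (t < P)%N -> z = (m * P + t)%N -> (z %% P = t)%N.
Proof. by move=> Ht ->; rewrite modnMDl modn_small. Qed.

Lemma two_cases z P : (0 < P)%N -> ((z %% (2 * P)) %% P = z %% P)%N.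
Proof. move=> HP. by rewrite modn_dvdm // dvdn_mull. Qed.


Lemma sum_mod' z l c (v : rat) : (c < l)%N ->
  \sum_(i < z.+1) (if z == (c + l * i)%N then v else 0) = if (z %% l == c)%N then v else 0.
Proof.
move=> Hc; rewrite -sum_mod //; apply: eq_bigr => i _.
by rewrite addnC mulnC.
Qed.

Lemma modl z P c (v : rat) : (c < P)%N ->
  (if (z %% (2 * P) == c)%N then v else 0) + (if (z %% (2 * P) == c + P)%N then v else 0)
  = if (z %% P == c)%N then v else 0.
Proof.
move=> HcP; have HP : (0 < P)%N by lia.
rewrite -(two_cases z HP).
have Hr : (z %% (2 * P) < 2 * P)%N by rewrite ltn_pmod // muln_gt0.
move: Hr; set r := (z %% (2 * P))%N => Hr.
case: (ltnP r P) => H.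
  rewrite (modn_small H).
  ifs.
have -> : (r %% P = r - P)%N by apply: (@modE _ 1); lia.
ifs.
Qed.

Lemma gammaE p k y x la a b : (1 <= k <= p - 1)%N ->
  gammaH p k y x la a b = if (y %% (p - 1) == k - 1)%N then x la a b else 0.
Proof.
move=> Hk.
rewrite /gammaH /ser evM.
under eq_bigr => i _ do rewrite /addH /addM /addG.
under eq_bigr => i _ do rewrite !flrE /e_id.
rewrite big_split /= !sum_mod' /ll; try lia.
by rewrite modl //; lia.
Qed.

Lemma gammaF p k y x : (1 <= k <= p - 1)%N ->
  gammaH p k y x = if (y %% (p - 1) == k - 1)%N then x else zeroG.
Proof.
move=> Hk; apply: functional_extensionality => la.
apply: functional_extensionality => a; apply: functional_extensionality => b.
rewrite gammaE //; by case: ifP.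
Qed.


Lemma addHE (f g : Hm) y x la a b : addH f g y x la a b = f y x la a b + g y x la a b.
Proof. by []. Qed.

Lemma modr2 y P : (0 < P)%N -> (y %% P = 0)%N -> (y %% (2 * P) = 0 \/ y %% (2 * P) = P)%N.
Proof.
move=> HP H0; move: (two_cases y HP); rewrite H0.
have Hr : (y %% (2 * P) < 2 * P)%N by rewrite ltn_pmod // muln_gt0.
move: Hr; set r := (y %% (2 * P))%N => Hr.
case: (ltnP r P) => H.
  by rewrite (modn_small H); left.
have -> : (r %% P = r - P)%N by apply: (@modE _ 1); lia.
move=> ?; right; lia.
Qed.

Lemma inner_up p y i x la a b : (y %% ll p = 0 \/ y %% ll p = p - 1)%N ->
  \sum_(1 <= k < p - 1) flr (i * ll p + k)%N (e_up p k) y x la a b = 0.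
Proof.
move=> H; rewrite big1_seq //= => k; rewrite mem_index_iota => Hk.
rewrite flrE cond_split; last by rewrite /ll; lia.
case: ifP => //; move/andP=> [_ /eqP]; lia.
Qed.

Lemma inner_down p y i x la a b : (y %% ll p = 0 \/ y %% ll p = p - 1)%N ->
  \sum_(1 <= k < p - 1) flr (i * ll p + (p - 1) + k)%N (e_down p (p - k - 1)) y x la a b = 0.
Proof.
move=> H; rewrite big1_seq //= => k; rewrite mem_index_iota => Hk.
rewrite flrE -addnA cond_split; last by rewrite /ll; lia.
case: ifP => //; move/andP=> [_ /eqP]; lia.
Qed.

Lemma chi_id p y x la a b : (3 <= p)%N -> (y %% (p - 1) = 0)%N ->
  chiH p y x la a b = x la a b.
Proof.
move=> Hp Hy.
have H : (y %% ll p = 0 \/ y %% ll p = p - 1)%N by apply: modr2 => //; lia.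
rewrite /chiH /ser evM.
under eq_bigr => i _ do rewrite !addHE !evH inner_up // inner_down // !flrE /e_id.
under eq_bigr => i _ do rewrite add0r addr0.
rewrite big_split /=.
rewrite (eq_bigr (fun i : 'I_y.+1 => if y == (i * ll p + 0)%N then x la a b else 0));
  last by move=> i _; rewrite addn0.
rewrite !sum_mod /ll; try lia.
rewrite modl; last by lia.
by rewrite Hy eqxx.
Qed.

Lemma mulG0 (g : G) la a b : mulG g zeroG la a b = 0.
Proof. by rewrite /mulG big1 // => m _; rewrite /zeroG mulr0. Qed.

Lemma chi_zero p y la a b : chiH p y zeroG la a b = 0.
Proof.
rewrite /chiH /ser evM big1 // => i _.
rewrite !addHE !evH !flrE !big1 //.
- by rewrite /e_id /zeroG; do 2 case: ifP => _; rewrite ?addr0.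
- by move=> k _; rewrite flrE /e_down mulG0; case: ifP.
- by move=> k _; rewrite flrE /e_up mulG0; case: ifP.
Qed.

Lemma iotaE p i y la a b : iotaH p i y la a b = y la a b.
Proof.
rewrite /iotaH /ser evM.
under eq_bigr => j _ do rewrite flrE /e_id eq_sym.
by rewrite sum_ind ltnSn.
Qed.

Lemma pow_id p n : forall i x la a b, powH (ll p) (iotaH p) n i x la a b = x la a b.
Proof.
elim: n => [|n IH] i x la a b; first by [].
by rewrite /powH iterS /compH /= iotaE -/(powH _ _ _) IH.
Qed.

Lemma A1 y P : (2 <= P)%N -> ((y + (2 * P - 1)) %% P == P - 1)%N = (y %% P == 0)%N.
Proof.
move=> HP; rewrite {1}(divn_eq y P).
have Hs : (y %% P < P)%N by rewrite ltn_pmod //; lia.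
move: Hs; set s := (y %% P)%N; set q := (y %/ P)%N => Hs.
case: (posnP s) => Hs0.
  rewrite (@modE _ (q + 1) (P - 1)); [by rewrite eqxx|lia|rewrite Hs0; nia].
rewrite (@modE _ (q + 2) (s - 1)); [|lia|nia].
apply/eqP; lia.
Qed.


Lemma A2 p y : (3 <= p)%N -> (y %% (p - 1) = p - 1 - 1)%N ->
  ((y + dgamma p (p - 1)) %% (p - 1) = 0)%N.
Proof.
move=> Hp Hy; rewrite /dgamma /ll (divn_eq y (p - 1)) Hy.
set P := (p - 1)%N; set q := (y %/ P)%N.
apply: (@modE _ (q + 2 * P - 1) 0); nia.
Qed.

Lemma A3 p k y : (2 <= k <= p - 2)%N -> (y %% (p - 1) = k - 1)%N ->
  ((y + dgamma p k) %% (p - 1) = p - k - 1)%N.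
Proof.
move=> Hk Hy; rewrite /dgamma /ll (divn_eq y (p - 1)) Hy.
set P := (p - 1)%N; set q := (y %/ P)%N.
have hP : (P = p - 1)%N by [].
clearbody q P; clear Hy.
have h1 : (k * (2 * P - 1) = 2 * (k * P) - k)%N.
  by rewrite mulnBr muln1 mulnCA.
have h2 : ((q + 2 * k - 1) * P = q * P + 2 * (k * P) - P)%N.
  by rewrite mulnBl mulnDl mul1n -mulnA.
have h3 : (2 * P <= k * P)%N by rewrite leq_mul2r; lia.
apply: (@modE _ (q + 2 * k - 1) (p - k - 1)); first lia.
rewrite h2 h1; move: (k * P)%N (q * P)%N h3 => kP qP h3; lia.
Qed.

Lemma zloc0 p : prime p -> zloc p 0.
Proof.
move=> Hp; have Hp1 := prime_gt1 Hp.
rewrite /zloc; have -> : denq 0 = 1 by []. rewrite /= dvdn1.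
by case: eqP => // E; rewrite E in Hp1.
Qed.

Lemma inLambda0 p : prime p -> inLambda p zeroG.
Proof.
move=> Hp; split.
  by move=> la i j; split; [exact: zloc0|rewrite /zeroG eqxx].
move=> k _; split=> i j _ _; rewrite /congp /zeroG subrr mul0r; exact: zloc0.
Qed.

End Helpers.

Theorem mainTheorem9 (p : nat) :
  prime p -> (3 <= p)%N ->
  eqH p ((p - 1) * ll p)%N
    (addH (compH (dchi p) (chiH p) (gammaH p (p - 1)))
    (addH (compH (dgamma p (p - 1)) (gammaH p (p - 1)) (chiH p))
          (\big[addH/zeroH]_(2 <= k < p - 1)
              compH (dgamma p k) (gammaH p k) (gammaH p (p - k)))))
    (powH (ll p) (iotaH p) (p - 1)).
Proof.
move=> Hp Hp3 i x _.
exists zeroG; split; first exact: inLambda0.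
move=> la a b.
rewrite /addG /oppG /scaleG mulG0 GRing.mulr0 pow_id.
apply/eqP; rewrite GRing.subr_eq0; apply/eqP.
rewrite !addHE evH /compH /=.
have Hs : (i %% (p - 1) < p - 1)%N by rewrite ltn_pmod //; lia.
rewrite (@gammaF p (p - 1) (i + dchi p) x); last lia.
rewrite /dchi /ll A1; last lia.
have -> : chiH p i (if (i %% (p - 1) == 0)%N then x else zeroG) la a b
          = if (i %% (p - 1) == 0)%N then x la a b else 0%R.
  by case: ifP => H0; [rewrite chi_id //; apply/eqP | rewrite chi_zero].
rewrite (@gammaE p (p - 1) i); last lia.
have -> : (if (i %% (p - 1) == p - 1 - 1)%N then chiH p (i + dgamma p (p - 1)) x la a b else 0%R)
          = if (i %% (p - 1) == p - 1 - 1)%N then x la a b else 0%R.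
  by case: ifP => H2 //; rewrite chi_id //; apply: A2 => //; apply/eqP.
rewrite (@eq_big_nat _ _ _ 2 (p - 1) _
   (fun k => if (k == (i %% (p - 1)).+1)%N then x la a b else 0%R)); last first.
  move=> k Hk; rewrite gammaE; last lia.
  case: eqP => Hk1.
    rewrite gammaE; last lia.
    rewrite A3 //; last lia.
    rewrite eqxx; case: eqP => //; lia.
  case: eqP => //; lia.
rewrite sum_nat_ind.
move: Hs; set s := (i %% (p - 1))%N => Hs.
ifs.
Qed.
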